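(* Let $A$ be a Nakayama algebra. Then the number of isomorphism classes of indecomposable projective $A$-modules of injective dimension equal to one equals the number of isomorphism classes of indecomposable injective $A$-modules of projective dimension equal to one.
   Context: $A$ is a finite-dimensional algebra over a field $K$ given by a connected quiver and admissible relations; it is a Nakayama algebra if every indecomposable (finite-dimensional right) module is uniserial, i.e. has a unique composition series. *)

(* Defs.v *)
From HB Require Import structures.
From mathcomp Require Import all_boot all_order all_algebra.
From mathcomp Require Import falgebra.
Set Implicit Arguments. Unset Strict Implicit. Unset Printing Implicit Defensive.
Import GRing.Theory.
Local Open Scope ring_scope.

Section Modules.
Variables (K : fieldType) (A : falgType K).

(* A finite-dimensional right A-module: the K-space 'rV[K]_rdim, where
   v . a := v *m ract a.  Right module axiom v.(ab) = (v.a).b. *)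
Record rmod := RMod {
  rdim : nat;
  ract : A -> 'M[K]_rdim;
  ract_lin : forall (k : K) (a b : A), ract (k *: a + b) = k *: ract a + ract b;
  ract1 : ract 1 = 1%:M;
  ractM : forall a b : A, ract (a * b) = ract a *m ract b
}.

(* A-module homomorphisms M -> N, acting by v |-> v *m f. *)
Definition is_hom (M N : rmod) (f : 'M[K]_(rdim M, rdim N)) : Prop :=
  forall a : A, ract M a *m f = f *m ract N a.

Definition iso (M N : rmod) : Prop :=
  exists (f : 'M[K]_(rdim M, rdim N)) (g : 'M[K]_(rdim N, rdim M)),
    [/\ is_hom f, is_hom g, f *m g = 1%:M & g *m f = 1%:M].

(* submodules = A-stable subspaces (row spaces of square matrices) *)
Definition submod (M : rmod) (U : 'M[K]_(rdim M)) : Prop :=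
  forall a : A, (U *m ract M a <= U)%MS.

Definition indecomposable (M : rmod) : Prop :=
  (0 < rdim M)%N /\
  forall U V : 'M[K]_(rdim M), submod U -> submod V ->
    (1%:M <= U + V)%MS -> (U :&: V <= (0 : 'M[K]_(rdim M)))%MS ->
    U = 0 \/ V = 0.

Definition uniserial (M : rmod) : Prop :=
  forall U V : 'M[K]_(rdim M), submod U -> submod V ->
    (U <= V)%MS \/ (V <= U)%MS.

Definition simple_mod (M : rmod) : Prop :=
  (0 < rdim M)%N /\
  forall U : 'M[K]_(rdim M), submod U -> U = 0 \/ (1%:M <= U)%MS.

Definition projective_mod (P : rmod) : Prop :=
  forall (N L : rmod) (g : 'M[K]_(rdim N, rdim L)) (f : 'M[K]_(rdim P, rdim L)),
    is_hom g -> row_full g -> is_hom f ->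
    exists h : 'M[K]_(rdim P, rdim N), is_hom h /\ h *m g = f.

Definition injective_mod (I : rmod) : Prop :=
  forall (L N : rmod) (g : 'M[K]_(rdim L, rdim N)) (f : 'M[K]_(rdim L, rdim I)),
    is_hom g -> row_free g -> is_hom f ->
    exists h : 'M[K]_(rdim N, rdim I), is_hom h /\ g *m h = f.

(* pd M <= n : there is a projective resolution
   0 -> P_n -> ... -> P_1 -> P_0 -> M -> 0 *)
Definition pd_le (M : rmod) (n : nat) : Prop :=
  exists (P : nat -> rmod) (d : forall i, 'M[K]_(rdim (P i.+1), rdim (P i)))
         (e : 'M[K]_(rdim (P 0%N), rdim M)),
    [/\ forall i, projective_mod (P i),
        forall i, is_hom (d i),
        [/\ is_hom e, row_full e & (kermx e == d 0%N)%MS],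
        forall i, (kermx (d i) == d i.+1)%MS &
        rdim (P n.+1) = 0%N].

(* id M <= n : there is an injective coresolution
   0 -> M -> I_0 -> I_1 -> ... -> I_n -> 0 *)
Definition id_le (M : rmod) (n : nat) : Prop :=
  exists (I : nat -> rmod) (d : forall i, 'M[K]_(rdim (I i), rdim (I i.+1)))
         (e : 'M[K]_(rdim M, rdim (I 0%N))),
    [/\ forall i, injective_mod (I i),
        forall i, is_hom (d i),
        [/\ is_hom e, row_free e & (e == kermx (d 0%N))%MS],
        forall i, (d i == kermx (d i.+1))%MS &
        rdim (I n.+1) = 0%N].

Definition proj_dim_eq (M : rmod) (n : nat) : Prop :=
  pd_le M n /\ forall m, (m < n)%N -> ~ pd_le M m.

Definition inj_dim_eq (M : rmod) (n : nat) : Prop :=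
  id_le M n /\ forall m, (m < n)%N -> ~ id_le M m.

Definition num_iso_classes (Q : rmod -> Prop) (n : nat) : Prop :=
  exists s : 'I_n -> rmod,
    [/\ forall i, Q (s i),
        forall i j, iso (s i) (s j) -> i = j &
        forall M, Q M -> exists i, iso M (s i)].

Definition connected_alg : Prop :=
  forall e : A, e * e = e -> (forall a : A, e * a = a * e) -> e = 0 \/ e = 1.

(* A elementary (A/rad A = K x ... x K, i.e. A = KQ/I for a quiver Q and an
   admissible ideal I, by Gabriel): every simple module is one-dimensional *)
Definition elementary_alg : Prop :=
  forall S : rmod, simple_mod S -> rdim S = 1%N.

Definition nakayama : Prop :=
  forall M : rmod, indecomposable M -> uniserial M.

End Modules.

(* Main.v *)
Require Import Defs.
From HB Require Import structures.
From mathcomp Require Import all_boot all_order all_algebra.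
From mathcomp Require Import falgebra.
From Stdlib Require List.
From Stdlib Require Import Classical ClassicalEpsilon.
From mathcomp Require Import zify.
Set Implicit Arguments. Unset Strict Implicit. Unset Printing Implicit Defensive.
Import GRing.Theory.
Import VectorInternalTheory.
Local Open Scope ring_scope.

Section Nak.
Variables (K : fieldType) (A : falgType K).
Local Notation rmod := (rmod A).

Lemma mx_ext m n (X Y : 'M[K]_(m, n)) :
  (forall u : 'rV_m, u *m X = u *m Y) -> X = Y.
Proof. by move=> H; apply/row_matrixP => i; rewrite !rowE H. Qed.

Lemma ract0 (M : rmod) : ract M 0 = 0.
Proof.
have H := ract_lin M 1 0 0; rewrite !scale1r !addr0 in H.
by apply/(addrI (ract M 0)); rewrite addr0 -H.
Qed.

Lemma ractD (M : rmod) a b : ract M (a + b) = ract M a + ract M b.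
Proof. by have := ract_lin M 1 a b; rewrite !scale1r. Qed.

Lemma ractZ (M : rmod) k a : ract M (k *: a) = k *: ract M a.
Proof. by have := ract_lin M k a 0; rewrite !addr0 ract0 addr0. Qed.

Lemma ract_sum (M : rmod) I (r : seq I) (P : pred I) (F : I -> A) :
  ract M (\sum_(i <- r | P i) F i) = \sum_(i <- r | P i) ract M (F i).
Proof.
elim/big_rec2: _ => [|i x y _ <-]; first exact: ract0.
by rewrite ractD.
Qed.

Lemma hom_comp (M N L : rmod) (f : 'M_(rdim M, rdim N)) (g : 'M_(rdim N, rdim L)) :
  is_hom f -> is_hom g -> is_hom (f *m g).
Proof. by move=> hf hg a; rewrite mulmxA hf -mulmxA hg mulmxA. Qed.

Lemma hom_id (M : rmod) : is_hom (1%:M : 'M_(rdim M)).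
Proof. by move=> a; rewrite mulmx1 mul1mx. Qed.

Lemma hom_add (M N : rmod) (f g : 'M_(rdim M, rdim N)) :
  is_hom f -> is_hom g -> is_hom (f + g).
Proof. by move=> hf hg a; rewrite mulmxDr mulmxDl hf hg. Qed.

Lemma hom_opp (M N : rmod) (f : 'M_(rdim M, rdim N)) :
  is_hom f -> is_hom (- f).
Proof. by move=> hf a; rewrite mulmxN mulNmx hf. Qed.

Lemma hom_sub (M N : rmod) (f g : 'M_(rdim M, rdim N)) :
  is_hom f -> is_hom g -> is_hom (f - g).
Proof. by move=> hf hg; apply: hom_add => //; apply: hom_opp. Qed.

Lemma hom0 (M N : rmod) : is_hom (0 : 'M_(rdim M, rdim N)).
Proof. by move=> a; rewrite mulmx0 mul0mx. Qed.

Lemma hom_sum (M N : rmod) I (r : seq I) (F : I -> 'M_(rdim M, rdim N)) :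
  (forall i, is_hom (F i)) -> is_hom (\sum_(i <- r) F i).
Proof.
move=> H; elim/big_rec: _ => [|i x _ hx]; first exact: hom0.
exact: hom_add.
Qed.

Lemma iso_refl (M : rmod) : iso M M.
Proof. by exists 1%:M, 1%:M; split; rewrite ?mulmx1 //; apply: hom_id. Qed.

Lemma iso_sym (M N : rmod) : iso M N -> iso N M.
Proof. by case=> f [g [hf hg fg gf]]; exists g, f. Qed.

Lemma iso_trans (M N L : rmod) : iso M N -> iso N L -> iso M L.
Proof.
case=> f [g [hf hg fg gf]] [f' [g' [hf' hg' fg' gf']]].
exists (f *m f'), (g' *m g); split; try exact: hom_comp.
  by rewrite mulmxA -(mulmxA f) fg' mulmx1 fg.
by rewrite mulmxA -(mulmxA g') gf mulmx1 gf'.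
Qed.

Lemma proj_retract (P Q : rmod) (s : 'M_(rdim P, rdim Q)) (r : 'M_(rdim Q, rdim P)) :
  is_hom s -> is_hom r -> s *m r = 1%:M -> projective_mod Q -> projective_mod P.
Proof.
move=> hs hr sr pQ N L g f hg fg hf.
have [h [hh hgf]] := pQ N L g (r *m f) hg fg (hom_comp hr hf).
exists (s *m h); split; first exact: hom_comp.
by rewrite -mulmxA hgf mulmxA sr mul1mx.
Qed.

Lemma inj_retract (J I : rmod) (s : 'M_(rdim J, rdim I)) (r : 'M_(rdim I, rdim J)) :
  is_hom s -> is_hom r -> s *m r = 1%:M -> injective_mod I -> injective_mod J.
Proof.
move=> hs hr sr iI L N g f hg fg hf.
have [h [hh hgf]] := iI L N g (f *m s) hg fg (hom_comp hf hs).
exists (h *m r); split; first exact: hom_comp.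
by rewrite mulmxA hgf -mulmxA sr mulmx1.
Qed.

Lemma proj_iso (P Q : rmod) : iso P Q -> projective_mod Q -> projective_mod P.
Proof. by case=> f [g [hf hg fg _]]; apply: proj_retract hf hg fg. Qed.

Lemma inj_iso (P Q : rmod) : iso P Q -> injective_mod Q -> injective_mod P.
Proof. by case=> f [g [hf hg fg _]]; apply: inj_retract hf hg fg. Qed.

Definition rzero : rmod.
refine (@RMod _ _ 0%N (fun _ => 0) _ _ _); by move=> *; rewrite !flatmx0.
Defined.

Lemma rzero_proj : projective_mod rzero.
Proof.
move=> N L g f _ _ _; exists 0; split; first exact: hom0.
by rewrite !flatmx0.
Qed.

Lemma rzero_inj : injective_mod rzero.
Proof.
move=> L N g f _ _ _; exists 0; split; first exact: hom0.
by rewrite !thinmx0.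
Qed.

Section Sub.
Variables (M : rmod) (U : 'M[K]_(rdim M)) (sU : submod U).
Local Notation B := (row_base U).

Lemma stab_base a : (B *m ract M a <= B)%MS.
Proof.
by rewrite (eqmxMr (ract M a) (eq_row_base U)) eq_row_base; apply: sU.
Qed.

Lemma base_pinv : B *m pinvmx B = 1%:M.
Proof.
apply: (row_free_inj (row_base_free U)); rewrite mul1mx.
exact: mulmxKpV.
Qed.

Definition rsub : rmod.
refine (@RMod _ _ (\rank U) (fun a => B *m ract M a *m pinvmx B) _ _ _).
- by move=> k a b; rewrite ract_lin mulmxDr mulmxDl -scalemxAr -scalemxAl.
- by rewrite ract1 mulmx1 base_pinv.
- move=> a b; rewrite ractM; set P := pinvmx B; rewrite (mulmxA _ (B *m _) P) (mulmxA _ B) mulmxKpV ?stab_base //; by rewrite !mulmxA.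

Defined.

Lemma rsub_incl : is_hom (B : 'M_(rdim rsub, rdim M)).
Proof. by move=> a /=; rewrite mulmxKpV ?stab_base. Qed.

Lemma rsub_free : row_free (B : 'M_(rdim rsub, rdim M)).
Proof. exact: row_base_free. Qed.

Lemma rsub_factor (X : rmod) (f : 'M_(rdim X, rdim M)) :
  is_hom f -> (f <= U)%MS ->
  is_hom (f *m pinvmx B : 'M_(rdim X, rdim rsub)) /\ f *m pinvmx B *m B = f.
Proof.
move=> hf sfU; have sfB : (f <= B)%MS by rewrite eq_row_base.
split; last exact: mulmxKpV.
move=> a /=; rewrite mulmxA hf; set P := pinvmx B; by rewrite (mulmxA _ (B *m _) P) (mulmxA _ B) mulmxKpV.
Qed.

End Sub.


Definition stab (M : rmod) k (X : 'M[K]_(k, rdim M)) := forall a, (X *m ract M a <= X)%MS.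

Lemma stab_gen (M : rmod) k (X : 'M_(k, rdim M)) : stab X -> submod <<X>>%MS.
Proof. by move=> sX a; rewrite (eqmxMr _ (genmxE X)) genmxE; apply: sX. Qed.

Lemma stab_eqmx (M : rmod) k l (X : 'M_(k, rdim M)) (Y : 'M_(l, rdim M)) :
  (X :=: Y)%MS -> stab X -> stab Y.
Proof. by move=> e sX a; have := sX a; rewrite (eqmxMr _ e) e. Qed.

Lemma stab_img (M N : rmod) (f : 'M_(rdim M, rdim N)) : is_hom f -> stab f.
Proof. by move=> hf a; rewrite -hf submxMl. Qed.

Lemma stab_ker (M N : rmod) (f : 'M_(rdim M, rdim N)) : is_hom f -> stab (kermx f).
Proof.
move=> hf a; apply/sub_kermxP.
by rewrite -mulmxA hf mulmxA mulmx_ker mul0mx.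
Qed.

Lemma stabM (M N : rmod) k (X : 'M_(k, rdim M)) (f : 'M_(rdim M, rdim N)) :
  is_hom f -> stab X -> stab (X *m f).
Proof. by move=> hf sX a; rewrite -mulmxA -hf mulmxA submxMr. Qed.

Lemma stab_cap (M : rmod) k l (X : 'M_(k, rdim M)) (Y : 'M_(l, rdim M)) :
  stab X -> stab Y -> stab (X :&: Y)%MS.
Proof.
move=> sX sY a; rewrite sub_capmx; apply/andP; split.
  by apply: submx_trans (sX a); rewrite submxMr // capmxSl.
by apply: submx_trans (sY a); rewrite submxMr // capmxSr.
Qed.

Lemma stab_add (M : rmod) k l (X : 'M_(k, rdim M)) (Y : 'M_(l, rdim M)) :
  stab X -> stab Y -> stab (X + Y)%MS.
Proof.
move=> sX sY a; rewrite addsmxMr addsmxS //.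
Qed.

Lemma uni_chain (M : rmod) k l (X : 'M_(k, rdim M)) (Y : 'M_(l, rdim M)) :
  uniserial M -> stab X -> stab Y -> (X <= Y)%MS \/ (Y <= X)%MS.
Proof.
move=> uM sX sY; case: (uM _ _ (stab_gen sX) (stab_gen sY)); rewrite !genmxE; auto.
Qed.

Lemma uni_sum_full (M : rmod) k l (X : 'M_(k, rdim M)) (Y : 'M_(l, rdim M)) :
  uniserial M -> stab X -> stab Y -> (1%:M <= X + Y)%MS -> ~~ row_full Y ->
  row_full X.
Proof.
move=> uM sX sY full nY; case: (uni_chain uM sX sY) => [sXY|sYX].
  by rewrite -sub1mx (submx_trans full) // addsmx_sub sXY submx_refl in nY.
by rewrite -sub1mx (submx_trans full) // addsmx_sub sYX submx_refl.
Qed.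

Lemma uni_cap0 (M : rmod) k l (X : 'M_(k, rdim M)) (P : 'M_(l, rdim M)) :
  uniserial M -> stab X -> stab P -> (X :&: P <= (0 : 'M_(rdim M)))%MS -> P != 0 ->
  X = 0.
Proof.
move=> uM sX sP c0 nP; case: (uni_chain uM sX sP) => [sXP|sPX].
  apply/eqP; rewrite -submx0; apply: submx_trans c0.
  by rewrite sub_capmx sXP submx_refl.
have : (P <= (0 : 'M_(rdim M)))%MS.
  by apply: submx_trans c0; rewrite sub_capmx sPX submx_refl.
by rewrite submx0 (negbTE nP).
Qed.

Lemma uni_indec (M : rmod) : uniserial M -> (0 < rdim M)%N -> indecomposable M.
Proof.
move=> uM pos; split => // U V sU sV full c0.
case: (uM U V sU sV) => [sUV|sVU].
  left; apply/eqP; rewrite -submx0; apply: submx_trans c0.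
  by rewrite sub_capmx sUV submx_refl.
right; apply/eqP; rewrite -submx0; apply: submx_trans c0.
by rewrite sub_capmx sVU submx_refl.
Qed.

Lemma uni_sub (M : rmod) (U : 'M_(rdim M)) (sU : submod U) :
  uniserial M -> uniserial (rsub sU).
Proof.
move=> uM X Y sX sY.
have st (Z : 'M_(rdim (rsub sU))) : submod Z -> stab (Z *m row_base U).
  move=> sZ a; rewrite -mulmxA -(rsub_incl sU a) mulmxA submxMr //; exact: sZ.
case: (uni_chain uM (st _ sX) (st _ sY)); rewrite !submxMfree ?row_base_free; auto.
Qed.

Lemma uni_quot (Q J : rmod) (p : 'M_(rdim Q, rdim J)) :
  uniserial Q -> is_hom p -> row_full p -> uniserial J.
Proof.
move=> uQ hp fp.
pose pre (X : 'M_(rdim J)) := kermx (p *m cokermx X).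
have preS X : (pre X *m p <= X)%MS.
  by rewrite submxE -mulmxA; apply/eqP/sub_kermxP.
have stp X : submod X -> stab (pre X).
  move=> sX a; apply/sub_kermxP; rewrite mulmxA -(mulmxA _ _ p) hp mulmxA.
  by apply/eqP; rewrite -submxE (submx_trans (submxMr _ (preS X))) //; apply: sX.
have subp X : (X <= pre X *m p)%MS.
  rewrite -{1}(mulmxKpV (submx_full X fp)) submxMr //.
  by apply/sub_kermxP; rewrite mulmxA mulmxKpV ?submx_full //; apply/eqP; rewrite -submxE.
move=> X Y sX sY; case: (uni_chain uQ (stp _ sX) (stp _ sY)) => h; [left|right].
  by apply: submx_trans (subp X) _; apply: submx_trans (preS Y); apply: submxMr.
by apply: submx_trans (subp Y) _; apply: submx_trans (preS X); apply: submxMr.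
Qed.


Lemma stab_sums (M : rmod) T (s : seq T) (F : T -> 'M_(rdim M)) :
  (forall x, List.In x s -> stab (F x)) -> stab (\sum_(x <- s) F x)%MS.
Proof.
elim: s => [|x s IH] sF; rewrite ?big_nil ?big_cons.
  by move=> a; rewrite mul0mx sub0mx.
apply: stab_add; first by apply: sF; left.
by apply: IH => y iy; apply: sF; right.
Qed.

Lemma sum_sub_sums m n T (s : seq T) (G : T -> 'M[K]_(m, n)) (F : T -> 'M[K]_n) :
  (forall x, G x <= F x)%MS -> ((\sum_(x <- s) G x)%R <= (\sum_(x <- s) F x)%MS)%MS.
Proof.
move=> sGF; elim: s => [|x s IH]; rewrite ?big_nil ?big_cons ?sub0mx //.
exact: addmx_sub_adds.
Qed.

Lemma chain_full (Y : rmod) T (s : seq T) (F : T -> 'M_(rdim Y)) :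
  uniserial Y -> (0 < rdim Y)%N -> (forall x, List.In x s -> stab (F x)) ->
  (1%:M <= \sum_(x <- s) F x)%MS -> exists x, List.In x s /\ row_full (F x).
Proof.
move=> uY pos; elim: s => [|x s IH] sF.
  rewrite big_nil sub1mx /row_full mxrank0 => /eqP e.
  by rewrite -e in pos.
rewrite big_cons => full.
have sF' : forall y, List.In y s -> stab (F y) by move=> y iy; apply: sF; right.
case fr: (row_full (\sum_(y <- s) F y)%MS).
  have [y [iy fy]] := IH sF' (submx_full _ fr); exists y; split => //; by right.
exists x; split; first by left.
apply: (uni_sum_full uY (sF x (or_introl erefl)) (stab_sums sF') full).
by rewrite fr.
Qed.

Lemma chain_free (X : rmod) T (s : seq T) (G : T -> 'M_(rdim X)) :
  uniserial X -> (0 < rdim X)%N -> (forall x, List.In x s -> stab (G x)) ->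
  (exists x, List.In x s /\ G x == 0) \/
  (exists Z : 'M_(rdim X), [/\ stab Z, Z != 0 & forall x, List.In x s -> (Z <= G x)%MS]).
Proof.
move=> uX pos; elim: s => [|x s IH] sG.
  right; exists 1%:M; split => //.
    by move=> a; rewrite submx1.
  by apply/eqP => /matrixP/(_ (Ordinal pos) (Ordinal pos)); rewrite !mxE eqxx => /eqP; rewrite oner_eq0.
have sG' : forall y, List.In y s -> stab (G y) by move=> y iy; apply: sG; right.
case: (IH sG') => [[y [iy hy]]|[Z [sZ nZ hZ]]]; first by left; exists y; split => //; right.
case gx: (G x == 0); first by left; exists x; split => //; left.
case: (uni_chain uX sZ (sG x (or_introl erefl))) => h.
  right; exists Z; split => // y [<-|iy] //; exact: hZ.
right; exists <<G x>>%MS; split.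
- exact: stab_gen (sG x (or_introl erefl)).
- by rewrite -submx0 genmxE submx0 gx.
- move=> y [<-|iy]; first by rewrite genmxE.
  by rewrite genmxE (submx_trans h) ?hZ.
Qed.

Lemma big1_In m n T (s : seq T) (F : T -> 'M[K]_(m, n)) :
  (forall x, List.In x s -> F x = 0) -> \sum_(x <- s) F x = 0.
Proof.
elim: s => [|x s IH] H; rewrite ?big_nil // big_cons H ?IH ?addr0 //; last by left.
by move=> y iy; apply: H; right.
Qed.

Definition comp (M : rmod) :=
  {Q : rmod & ('M[K]_(rdim Q, rdim M) * 'M[K]_(rdim M, rdim Q))%type}.
Definition cQ (M : rmod) (x : comp M) := projT1 x.
Definition ci (M : rmod) (x : comp M) : 'M_(rdim (cQ x), rdim M) := (projT2 x).1.
Definition cp (M : rmod) (x : comp M) : 'M_(rdim M, rdim (cQ x)) := (projT2 x).2.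

Definition good (M : rmod) (x : comp M) :=
  [/\ indecomposable (cQ x), is_hom (ci x), is_hom (cp x) & ci x *m cp x = 1%:M].

Definition decomp (M : rmod) (s : seq (comp M)) :=
  (forall x, List.In x s -> good x) /\ \sum_(x <- s) cp x *m ci x = 1%:M.

Lemma comp_surj (M Y : rmod) (s : seq (comp M)) (f : 'M_(rdim M, rdim Y)) :
  decomp s -> uniserial Y -> (0 < rdim Y)%N -> is_hom f -> row_full f ->
  exists x, List.In x s /\ row_full (ci x *m f).
Proof.
move=> [gs sum1] uY pos hf ff.
pose F (x : comp M) : 'M_(rdim Y) := <<ci x *m f>>%MS.
have sF x : List.In x s -> stab (F x).
  move=> ix; apply: stab_gen; apply: stab_img; apply: hom_comp hf.
  by case: (gs x ix).
have full : (1%:M <= \sum_(x <- s) F x)%MS.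
  apply: submx_trans (submx_full _ ff) _.
  rewrite -[f]mul1mx -sum1 mulmx_suml.
  by apply: sum_sub_sums => x; rewrite genmxE -mulmxA submxMl.
have [x [ix fx]] := chain_full uY pos sF full.
by exists x; split => //; move: fx; rewrite /row_full genmxE.
Qed.

Lemma comp_inj (M X : rmod) (s : seq (comp M)) (f : 'M_(rdim X, rdim M)) :
  decomp s -> uniserial X -> (0 < rdim X)%N -> is_hom f -> row_free f ->
  exists x, List.In x s /\ row_free (f *m cp x).
Proof.
move=> [gs sum1] uX pos hf ff.
pose G (x : comp M) : 'M_(rdim X) := kermx (f *m cp x).
have sG x : List.In x s -> stab (G x).
  by move=> ix; case: (gs x ix) => _ _ hp _; apply: stab_ker (hom_comp hf hp).
case: (chain_free uX pos sG) => [[x [ix hx]]|[Z [sZ nZ hZ]]].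
  by exists x; split => //; rewrite -kermx_eq0.
have : Z *m f == 0.
  rewrite -[f]mulmx1 -sum1 mulmx_sumr mulmx_sumr big1_In // => x ix.
  by have /sub_kermxP h := hZ x ix; rewrite (mulmxA f) mulmxA h mul0mx.
by rewrite mulmx_free_eq0 // (negbTE nZ).
Qed.


Lemma proj_hom (M : rmod) (U V : 'M_(rdim M)) :
  submod U -> submod V -> (U :&: V)%MS = 0 -> (1%:M <= U + V)%MS ->
  is_hom (proj_mx U V).
Proof.
move=> sU sV cap0 full a; apply: mx_ext => u.
rewrite (mulmxA u (ract M a)) (mulmxA u (proj_mx U V)).
have uUV : (u <= U + V)%MS by apply: submx_trans full; apply: submx1.
rewrite -{1}(add_proj_mx cap0 uUV) mulmxDl mulmxDl.
have w1U : (u *m proj_mx U V *m ract M a <= U)%MS.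
  by apply: submx_trans (sU a); apply: submxMr; apply: proj_mx_sub.
have w2V : (u *m proj_mx V U *m ract M a <= V)%MS.
  by apply: submx_trans (sV a); apply: submxMr; apply: proj_mx_sub.
by rewrite (proj_mx_id cap0 w1U) (proj_mx_0 cap0 w2V) addr0.
Qed.

Lemma decomp_ex (M : rmod) : exists s : seq (comp M), decomp s.
Proof.
have [n le] : exists n, (rdim M <= n)%N by exists (rdim M).
elim: n M le => [|n IH] M le.
  exists [::]; split; first by move=> x [].
  by rewrite big_nil; apply/matrixP => i; have := leq_trans (ltn_ord i) le.
case: (classic (indecomposable M)) => [ind|nind].
  exists [:: existT _ M (1%:M, 1%:M)]; split.
    move=> x [<-|[]]; split => //; rewrite /ci /cp /=.
    - exact: hom_id.
    - exact: hom_id.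
    - by rewrite mulmx1.
  by rewrite big_cons big_nil addr0 mulmx1.
case: (posnP (rdim M)) => [e0|pos].
  exists [::]; split; first by move=> x [].
  by rewrite big_nil; apply/matrixP => i; have := leq_trans (ltn_ord i) (eq_leq e0).
have [U [V [sU sV full c0 [nU nV]]]] : exists U V : 'M_(rdim M),
    [/\ submod U, submod V, (1%:M <= U + V)%MS, (U :&: V <= (0 : 'M_(rdim M)))%MS &
     U != 0 /\ V != 0].
  apply: NNPP => H; apply: nind; split => // U V sU sV full c0.
  case: (eqVneq U 0) => [->|nU]; first by left.
  case: (eqVneq V 0) => [->|nV]; first by right.
  by exfalso; apply: H; exists U, V; split.
have cap0 : (U :&: V)%MS = 0 by apply/eqP; rewrite -submx0.
have cap0' : (V :&: U)%MS = 0 by rewrite capmxC.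
have full' : (1%:M <= V + U)%MS by rewrite addsmxC.
have rk : (\rank U + \rank V)%N = rdim M.
  by rewrite -mxrank_disjoint_sum //; apply/eqP; move: full; rewrite sub1mx.
have rU : (\rank U <= n)%N.
  have rlt : (\rank U < \rank U + \rank V)%N.
    by rewrite -[X in (X < _)%N]addn0 ltn_add2l lt0n mxrank_eq0.
  by rewrite rk in rlt; rewrite -ltnS (leq_trans rlt le).
have rV : (\rank V <= n)%N.
  have rlt : (\rank V < \rank U + \rank V)%N.
    by rewrite -[X in (X < _)%N]add0n ltn_add2r lt0n mxrank_eq0.
  by rewrite rk in rlt; rewrite -ltnS (leq_trans rlt le).
have [sU' [gU sumU]] := IH (rsub sU) rU.
have [sV' [gV sumV]] := IH (rsub sV) rV.
pose PU := proj_mx U V *m pinvmx (row_base U).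
pose PV := proj_mx V U *m pinvmx (row_base V).
have [hPU PUB] : is_hom (PU : 'M_(rdim M, rdim (rsub sU))) /\ PU *m row_base U = proj_mx U V.
  apply: rsub_factor; first exact: proj_hom.
  by rewrite -[proj_mx U V]mul1mx proj_mx_sub.
have [hPV PVB] : is_hom (PV : 'M_(rdim M, rdim (rsub sV))) /\ PV *m row_base V = proj_mx V U.
  apply: rsub_factor; first exact: proj_hom.
  by rewrite -[proj_mx V U]mul1mx proj_mx_sub.
have BPU : row_base U *m PU = 1%:M.
  rewrite /PU mulmxA proj_mx_id ?eq_row_base //; exact: base_pinv.
have BPV : row_base V *m PV = 1%:M.
  rewrite /PV mulmxA proj_mx_id ?eq_row_base //; exact: base_pinv.
pose liftU (x : comp (rsub sU)) : comp M := existT _ (cQ x) (ci x *m row_base U, PU *m cp x).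
pose liftV (x : comp (rsub sV)) : comp M := existT _ (cQ x) (ci x *m row_base V, PV *m cp x).
exists (map liftU sU' ++ map liftV sV'); split.
  move=> x hx0; case: (List.in_app_or _ _ _ hx0) => hx; have [y [ey iy]] := proj1 (List.in_map_iff _ _ _) hx; subst x.
    have [indy hi hp e] := gU y iy; split => //; rewrite /ci /cp /=.
    - exact: hom_comp hi (rsub_incl sU).
    - exact: hom_comp hPU hp.
    - by rewrite -mulmxA (mulmxA (row_base U)) BPU mul1mx.
  have [indy hi hp e] := gV y iy; split => //; rewrite /ci /cp /=.
  - exact: hom_comp hi (rsub_incl sV).
  - exact: hom_comp hPV hp.
  - by rewrite -mulmxA (mulmxA (row_base V)) BPV mul1mx.
rewrite big_cat !big_map /=.
have -> : \sum_(y <- sU') cp (liftU y) *m ci (liftU y) = proj_mx U V.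
  rewrite -PUB -[in RHS](mulmx1 PU) -sumU mulmx_sumr mulmx_suml.
  apply: eq_bigr => y _; rewrite /cp /ci /=.
  by rewrite !mulmxA.
have -> : \sum_(y <- sV') cp (liftV y) *m ci (liftV y) = proj_mx V U.
  rewrite -PVB -[in RHS](mulmx1 PV) -sumV mulmx_sumr mulmx_suml.
  apply: eq_bigr => y _; rewrite /cp /ci /=.
  by rewrite !mulmxA.
by rewrite -[proj_mx U V]mul1mx -[proj_mx V U]mul1mx add_proj_mx.
Qed.


Lemma lin_sum m n (g : 'rV[K]_m -> 'rV[K]_n) :
  (forall k u v, g (k *: u + v) = k *: g u + g v) ->
  forall I (r : seq I) (P : pred I) (F : I -> 'rV_m),
  g (\sum_(i <- r | P i) F i) = \sum_(i <- r | P i) g (F i).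
Proof.
move=> gl I r P F.
have g0 : g 0 = 0.
  have := gl 1 0 0; rewrite !scale1r !addr0 => H.
  by apply/(addrI (g 0)); rewrite addr0 -H.
elim/big_rec2: _ => [|i x y _ <-] //.
by have := gl 1 (F i) y; rewrite !scale1r.
Qed.

Lemma mx_of_lin m n (g : 'rV[K]_m -> 'rV[K]_n) :
  (forall k u v, g (k *: u + v) = k *: g u + g v) ->
  forall u, u *m (\matrix_(i < m) g (delta_mx 0 i)) = g u.
Proof.
move=> gl u; rewrite mulmx_sum_row {2}(row_sum_delta u) (lin_sum gl).
apply: eq_bigr => i _; rewrite rowK.
have := gl (u 0 i) (delta_mx 0 i) 0; rewrite !addr0 => ->.
have := gl 1 0 0; rewrite !scale1r !addr0 => H.
suff -> : g 0 = 0 by rewrite addr0.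
by apply/(addrI (g 0)); rewrite addr0 -H.
Qed.

Local Notation dA := (dim A).

Lemma v2r_lin k (x y : A) : v2r (k *: x + y) = k *: v2r x + v2r y.
Proof. by rewrite linearD linearZ. Qed.

Lemma r2v_lin k (u v : 'rV_dA) : r2v (k *: u + v) = k *: r2v u + r2v v :> A.
Proof. by rewrite linearD linearZ. Qed.

Definition rmulA (a : A) : 'M[K]_dA := \matrix_(i < dA) v2r (r2v (delta_mx 0 i) * a).

Lemma rmulAE a u : u *m rmulA a = v2r (r2v u * a).
Proof.
apply: (mx_of_lin (g := fun u => v2r (r2v u * a))) => k x y.
by rewrite r2v_lin mulrDl -scalerAl v2r_lin.
Qed.

Definition Areg : rmod.
refine (@RMod _ _ dA rmulA _ _ _).
- move=> k a b; apply: mx_ext => u.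
  by rewrite mulmxDr -scalemxAr !rmulAE mulrDr -scalerAr v2r_lin.
- by apply: mx_ext => u; rewrite rmulAE mulr1 r2vK mulmx1.
- move=> a b; apply: mx_ext => u.
  by rewrite mulmxA !rmulAE v2rK mulrA.
Defined.

Definition cyc (N : rmod) (n0 : 'rV_(rdim N)) : 'M[K]_(dA, rdim N) :=
  \matrix_(i < dA) (n0 *m ract N (r2v (delta_mx 0 i))).

Lemma cycE (N : rmod) n0 u : u *m cyc n0 = n0 *m ract N (r2v u).
Proof.
apply: (mx_of_lin (g := fun u => n0 *m ract N (r2v u))) => k x y.
by rewrite r2v_lin ract_lin mulmxDr scalemxAr.
Qed.

Lemma cyc_hom (N : rmod) n0 : is_hom (M := Areg) (cyc n0 : 'M_(rdim Areg, rdim N)).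
Proof.
move=> a; apply: mx_ext => u; rewrite (mulmxA u) /= rmulAE cycE v2rK ractM (mulmxA u) cycE.
by rewrite mulmxA.
Qed.

Lemma cyc1 (N : rmod) (n0 : 'rV_(rdim N)) : v2r 1 *m cyc n0 = n0.
Proof. by rewrite cycE v2rK ract1 mulmx1. Qed.

Lemma Areg_proj : projective_mod Areg.
Proof.
move=> N L g f hg fg hf.
pose n0 := v2r 1 *m f *m pinvmx g.
have n0g : n0 *m g = v2r 1 *m f by rewrite mulmxKpV // submx_full.
exists (cyc n0); split; first exact: cyc_hom.
apply: mx_ext => u; rewrite mulmxA cycE -mulmxA hg mulmxA n0g -mulmxA.
by rewrite -(hf (@r2v _ A u)) mulmxA; rewrite [v2r 1 *m _]rmulAE v2rK mul1r r2vK.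
Qed.

Lemma cover (E : rmod) : uniserial E -> (0 < rdim E)%N ->
  exists (Q : rmod) (p : 'M_(rdim Q, rdim E)),
    [/\ indecomposable Q, projective_mod Q, is_hom p & row_full p].
Proof.
move=> uE pos.
pose F (j : 'I_(rdim E)) : 'M_(rdim E) := <<cyc (delta_mx 0 j)>>%MS.
have sF j : List.In j (index_enum 'I_(rdim E)) -> stab (F j).
  by move=> _; apply: stab_gen; exact: stab_img (cyc_hom _).
have full : (1%:M <= \sum_(j < rdim E) F j)%MS.
  apply/row_subP => i; rewrite row1 (sumsmx_sup i) // genmxE.
  by rewrite -[X in (X <= _)%MS]cyc1 submxMl.
have [j [_ fj]] := chain_full uE pos sF full.
have [s ds] := decomp_ex Areg.
have fc : row_full (cyc (delta_mx 0 j) : 'M_(rdim Areg, rdim E)).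
  by move: fj; rewrite /row_full genmxE.
have [x [ix fx]] := comp_surj ds uE pos (cyc_hom (delta_mx 0 j)) fc.
have [indx hi hp e] := ds.1 x ix.
exists (cQ x), (ci x *m cyc (delta_mx 0 j)); split => //.
- exact: proj_retract hi hp e Areg_proj.
- exact: hom_comp hi (cyc_hom _).
Qed.


(* coinduced injective modules *)
Definition lmulA (a : A) : 'M[K]_dA := \matrix_(i < dA) v2r (a * r2v (delta_mx 0 i)).

Lemma lmulAE a u : u *m lmulA a = v2r (a * r2v u).
Proof.
apply: (mx_of_lin (g := fun u => v2r (a * r2v u))) => k x y.
by rewrite r2v_lin mulrDr -scalerAr v2r_lin.
Qed.

Lemma lmulA_lin k a b : lmulA (k *: a + b) = k *: lmulA a + lmulA b.
Proof.
apply: mx_ext => u.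
by rewrite mulmxDr -scalemxAr !lmulAE mulrDl -scalerAl v2r_lin.
Qed.

Lemma lmulA1 : lmulA 1 = 1%:M.
Proof. by apply: mx_ext => u; rewrite lmulAE mul1r r2vK mulmx1. Qed.

Lemma lmulAM a b : lmulA (a * b) = lmulA b *m lmulA a.
Proof. by apply: mx_ext => u; rewrite mulmxA !lmulAE v2rK mulrA. Qed.

Lemma vec_lin m n k (u v : 'rV[K]_(m * n)) : vec_mx (k *: u + v) = k *: vec_mx u + vec_mx v.
Proof. by rewrite linearD linearZ. Qed.

Lemma mxvec_lin m n k (u v : 'M[K]_(m, n)) : mxvec (k *: u + v) = k *: mxvec u + mxvec v.
Proof. by rewrite linearD linearZ. Qed.

Section Coind.
Variable M : rmod.
Local Notation m := (rdim M).

Definition coact (a : A) : 'M[K]_(dA * m) :=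
  \matrix_(i < dA * m) mxvec (lmulA a *m vec_mx (delta_mx 0 i)).

Lemma coactE a u : u *m coact a = mxvec (lmulA a *m vec_mx u).
Proof.
apply: (mx_of_lin (g := fun u => mxvec (lmulA a *m vec_mx u))) => k x y.
by rewrite vec_lin mulmxDr -scalemxAr mxvec_lin.
Qed.

Definition Coind : rmod.
refine (@RMod _ _ (dA * m) coact _ _ _).
- move=> k a b; apply: mx_ext => u.
  by rewrite mulmxDr -scalemxAr !coactE lmulA_lin mulmxDl -scalemxAl mxvec_lin.
- by apply: mx_ext => u; rewrite coactE lmulA1 mul1mx vec_mxK mulmx1.
- move=> a b; apply: mx_ext => u.
  by rewrite mulmxA !coactE mxvecK lmulAM mulmxA.
Defined.

Definition Fm (w : 'rV_m) : 'M[K]_(dA, m) :=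
  \matrix_(j < dA) (w *m ract M (r2v (delta_mx 0 j))).

Lemma FmE w v : v *m Fm w = w *m ract M (r2v v).
Proof.
apply: (mx_of_lin (g := fun v => w *m ract M (r2v v))) => k x y.
by rewrite r2v_lin ract_lin mulmxDr scalemxAr.
Qed.

Lemma Fm_lin k w w' : Fm (k *: w + w') = k *: Fm w + Fm w'.
Proof.
apply: mx_ext => v; rewrite mulmxDr -scalemxAr !FmE.
by rewrite mulmxDl -scalemxAl.
Qed.

Definition emb : 'M[K]_(m, dA * m) := \matrix_(i < m) mxvec (Fm (delta_mx 0 i)).

Lemma embE w : w *m emb = mxvec (Fm w).
Proof.
apply: (mx_of_lin (g := fun w => mxvec (Fm w))) => k x y.
by rewrite Fm_lin mxvec_lin.
Qed.

Lemma emb_hom : is_hom (N := Coind) (emb : 'M_(rdim M, rdim Coind)).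
Proof.
move=> a; apply: mx_ext => w; rewrite (mulmxA w) embE (mulmxA w) embE /=.
rewrite coactE mxvecK; congr mxvec; apply: mx_ext => v.
by rewrite FmE mulmxA lmulAE FmE v2rK ractM mulmxA.
Qed.

Lemma emb_free : row_free emb.
Proof.
apply: inj_row_free => w; rewrite embE => /eqP; rewrite mxvec_eq0 => /eqP F0.
by have := FmE w (v2r 1); rewrite F0 mulmx0 v2rK ract1 mulmx1.
Qed.

Lemma Coind_inj : injective_mod Coind.
Proof.
move=> L N g f hg fg hf.
have [gi ggi] := row_freeP fg.
pose lam : 'M_(rdim L, m) := \matrix_(i < rdim L) (v2r 1 *m vec_mx (delta_mx 0 i *m f)).
have lamE l : l *m lam = v2r 1 *m vec_mx (l *m f).
  apply: (mx_of_lin (g := fun l => v2r 1 *m vec_mx (l *m f))) => k x y.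
  by rewrite mulmxDl -scalemxAl vec_lin mulmxDr scalemxAr.
pose lam2 := gi *m lam.
pose Gn (n : 'rV_(rdim N)) : 'M_(dA, m) :=
  \matrix_(j < dA) (n *m ract N (r2v (delta_mx 0 j)) *m lam2).
have GE n v : v *m Gn n = n *m ract N (r2v v) *m lam2.
  apply: (mx_of_lin (g := fun v => n *m ract N (r2v v) *m lam2)) => k x y.
  by rewrite r2v_lin ract_lin mulmxDr mulmxDl -scalemxAr -scalemxAl.
have G_lin k n n' : Gn (k *: n + n') = k *: Gn n + Gn n'.
  apply: mx_ext => v; rewrite mulmxDr -scalemxAr !GE.
  by rewrite !mulmxDl -!scalemxAl.
pose h : 'M_(rdim N, dA * m) := \matrix_(i < rdim N) mxvec (Gn (delta_mx 0 i)).
have hE n : n *m h = mxvec (Gn n).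
  apply: (mx_of_lin (g := fun n => mxvec (Gn n))) => k x y.
  by rewrite G_lin mxvec_lin.
exists h; split.
  move=> a; apply: mx_ext => n; rewrite (mulmxA n) hE (mulmxA n) hE /=.
  rewrite coactE mxvecK; congr mxvec; apply: mx_ext => v.
  by rewrite GE mulmxA lmulAE GE v2rK ractM !mulmxA.
apply: mx_ext => l; rewrite (mulmxA l) hE -[l *m f]vec_mxK; congr mxvec.
apply: mx_ext => v; rewrite GE -(mulmxA l g) -hg (mulmxA l) /lam2.
rewrite (mulmxA _ gi) -(mulmxA _ g gi) ggi mulmx1 lamE -(mulmxA l) hf (mulmxA l).
rewrite /= coactE mxvecK mulmxA lmulAE v2rK mulr1 r2vK.
done.
Qed.

End Coind.

Lemma envelope (M : rmod) : exists (I : rmod) (e : 'M_(rdim M, rdim I)),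
  [/\ injective_mod I, is_hom e & row_free e].
Proof. exists (Coind M), (emb M); split; [exact: Coind_inj|exact: emb_hom|exact: emb_free]. Qed.


Lemma free_leq m n (f : 'M[K]_(m, n)) : row_free f -> (m <= n)%N.
Proof. by move=> rf; rewrite -(eqP rf) rank_leq_col. Qed.

Lemma full_leq m n (f : 'M[K]_(m, n)) : row_full f -> (n <= m)%N.
Proof. by move=> rf; rewrite -(eqP rf) rank_leq_row. Qed.

Lemma freeM m n p (f : 'M[K]_(m, n)) (g : 'M[K]_(n, p)) :
  row_free f -> row_free g -> row_free (f *m g).
Proof.
move=> ff fg; apply: inj_row_free => v; rewrite mulmxA => /eqP.
by rewrite mulmx_free_eq0 // mulmx_free_eq0 // => /eqP.
Qed.

Lemma fullM m n p (f : 'M[K]_(m, n)) (g : 'M[K]_(n, p)) :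
  row_full f -> row_full g -> row_full (f *m g).
Proof.
move=> /row_fullP[B Bf] /row_fullP[C Cg]; apply/row_fullP.
by exists (C *m B); rewrite mulmxA -(mulmxA C) Bf mulmx1 Cg.
Qed.

Lemma bij_of m n (f : 'M[K]_(m, n)) : row_free f -> (n <= m)%N ->
  exists g, f *m g = 1%:M /\ g *m f = 1%:M.
Proof.
move=> ff le; have [g fg] := row_freeP ff.
have rfull : row_full f.
  by rewrite /row_full (eqP ff) eqn_leq le (free_leq ff).
have [h hf] := row_fullP rfull.
have e : h = g by rewrite -[h]mulmx1 -fg mulmxA hf mul1mx.
by exists g; rewrite -e; split => //; rewrite e.
Qed.

Lemma bij_hom (M N : rmod) (f : 'M_(rdim M, rdim N)) g :
  is_hom f -> f *m g = 1%:M -> g *m f = 1%:M -> is_hom g.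
Proof.
move=> hf fg gf a.
by rewrite -[ract N a *m g]mul1mx -gf -!mulmxA (mulmxA f) -hf -mulmxA fg mulmx1.
Qed.

Lemma lift_free (X M N : rmod) (f : 'M_(rdim X, rdim N)) (g : 'M_(rdim M, rdim N)) :
  is_hom f -> is_hom g -> row_free g -> (f <= g)%MS ->
  exists h : 'M_(rdim X, rdim M), is_hom h /\ h *m g = f.
Proof.
move=> hf hg fg sfg; have hgf := mulmxKpV sfg; set h := f *m pinvmx g in hgf *.
exists h; split => // a; apply: (row_free_inj fg) => /=.
by rewrite -mulmxA hgf hf -(mulmxA h) hg mulmxA hgf.
Qed.

Lemma quot_map (Q J N : rmod) (p : 'M_(rdim Q, rdim J)) (f : 'M_(rdim Q, rdim N)) :
  is_hom p -> row_full p -> is_hom f -> kermx p *m f = 0 ->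
  exists th : 'M_(rdim J, rdim N), is_hom th /\ p *m th = f.
Proof.
move=> hp fp hf kf.
have [pp ppp] := row_fullP fp.
have key : p *m (pp *m f) = f.
  have /submxP [D eD] : ((p *m pp - 1%:M) <= kermx p)%MS.
    by apply/sub_kermxP; rewrite mulmxBl mul1mx -mulmxA ppp mulmx1 subrr.
  have e0 : (p *m pp - 1%:M) *m f = 0 by rewrite eD -mulmxA kf mulmx0.
  by move: e0; rewrite mulmxBl mul1mx mulmxA => /eqP; rewrite subr_eq0 => /eqP.
exists (pp *m f); split => //.
move=> a; apply: (row_full_inj fp); rewrite mulmxA -hp -mulmxA key hf.
by rewrite mulmxA key.
Qed.

Lemma split_epi (Q J : rmod) (p : 'M_(rdim Q, rdim J)) (s : 'M_(rdim J, rdim Q)) :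
  uniserial Q -> is_hom p -> is_hom s -> s *m p = 1%:M -> (0 < rdim J)%N -> row_free p.
Proof.
move=> uQ hp hs sp pos.
have sn0 : s != 0.
  apply/eqP => s0; move: sp; rewrite s0 mul0mx => /matrixP/(_ (Ordinal pos) (Ordinal pos)).
  by rewrite !mxE eqxx => /eqP; rewrite eq_sym oner_eq0.
rewrite -kermx_eq0; apply/eqP; apply: (uni_cap0 uQ (stab_ker hp) (stab_img hs) _ sn0).
apply/rV_subP => v; rewrite sub_capmx => /andP[vk /submxP[z ez]].
move/sub_kermxP: vk; rewrite ez -mulmxA sp mulmx1 => z0.
by rewrite z0 mul0mx sub0mx.
Qed.

Lemma split_mono (P Q : rmod) (i : 'M_(rdim P, rdim Q)) (r : 'M_(rdim Q, rdim P)) :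
  uniserial Q -> is_hom i -> is_hom r -> i *m r = 1%:M -> (0 < rdim P)%N -> row_full i.
Proof.
move=> uQ hi hr ir pos.
have rf : row_free r := split_epi uQ hr hi ir pos.
apply/row_fullP; exists r; apply: (row_free_inj rf).
by rewrite -mulmxA ir mulmx1 mul1mx.
Qed.

Lemma lift_surj (X E J : rmod) (pE : 'M_(rdim E, rdim J)) (lam : 'M_(rdim X, rdim E))
  (e : 'M_(rdim X, rdim J)) :
  uniserial E -> (0 < rdim J)%N -> is_hom pE -> row_full pE -> is_hom lam ->
  row_full e -> lam *m pE = e -> row_full lam.
Proof.
move=> uE pos hpE fpE hl fe le.
have [pe pee] := row_fullP fe.
have full : (1%:M <= lam + kermx pE)%MS.
  rewrite -[1%:M](subrK (pE *m pe *m lam)) addrC.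
  apply: addmx_sub_adds; first exact: submxMl.
  apply/sub_kermxP; rewrite mulmxBl mul1mx -!mulmxA le pee mulmx1 subrr //.
apply: (uni_sum_full uE (stab_img hl) (stab_ker hpE) full).
apply/negP => fk.
have : pE = 0.
  by have /sub_kermxP := submx_full 1%:M fk; rewrite mul1mx.
move=> pE0; move: fpE; rewrite pE0 /row_full mxrank0 => /eqP e0.
by rewrite -e0 in pos.
Qed.

Lemma max_exists (Pn : nat -> Prop) (b k : nat) :
  Pn k -> (forall n, Pn n -> (n <= b)%N) ->
  exists n, Pn n /\ forall m, Pn m -> (m <= n)%N.
Proof.
move=> Pk bnd; have [d le] : exists d, (b - k <= d)%N by exists (b - k)%N.
elim: d k Pk le => [|d IH] k Pk le.
  exists k; split => // m Pm; apply: leq_trans (bnd m Pm) _.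
  by rewrite -subn_eq0 -leqn0.
case: (classic (exists m, Pn m /\ (k < m)%N)) => [[m [Pm km]]|nm].
  apply: (IH m Pm); have := bnd m Pm; move: le km; clear; lia.
exists k; split => // m Pm; rewrite leqNgt; apply/negP => km; apply: nm; by exists m.
Qed.


Lemma sub_nocol m1 m2 (X : 'M[K]_(m1, 0)) (Y : 'M[K]_(m2, 0)) : (X <= Y)%MS.
Proof. by rewrite thinmx0 sub0mx. Qed.

Lemma eq_nocol m1 m2 (X : 'M[K]_(m1, 0)) (Y : 'M[K]_(m2, 0)) : (X == Y)%MS.
Proof. by rewrite !sub_nocol. Qed.

Definition seq3 (X Y : rmod) (n : nat) : rmod :=
  match n with 0 => X | 1 => Y | _ => rzero end.
Definition seq2 (X : rmod) (n : nat) : rmod :=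
  match n with 0 => X | _ => rzero end.

Lemma idle1 (P Q J : rmod) (i : 'M_(rdim P, rdim Q)) (p : 'M_(rdim Q, rdim J)) :
  injective_mod Q -> injective_mod J -> is_hom i -> is_hom p -> row_free i ->
  row_full p -> (kermx p == i)%MS -> id_le P 1.
Proof.
move=> iQ iJ hi hp fi fp ki.
exists (seq3 Q J).
exists (fun n => match n return 'M_(rdim (seq3 Q J n), rdim (seq3 Q J n.+1)) with
                 | 0 => p | _ => 0 end).
exists i; split.
- by case=> [|[|n]] //=; apply: rzero_inj.
- by case=> [|n] /=; [exact: hp|exact: hom0].
- by split => //=; rewrite andbC.
- case=> [|n] /=; last exact: eq_nocol.
  by apply/andP; split; [apply/sub_kermxP; rewrite mulmx0|apply: submx_full].
- by [].
Qed.

Lemma pdle1 (P Q J : rmod) (i : 'M_(rdim P, rdim Q)) (p : 'M_(rdim Q, rdim J)) :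
  projective_mod Q -> projective_mod P -> is_hom i -> is_hom p -> row_free i ->
  row_full p -> (kermx p == i)%MS -> pd_le J 1.
Proof.
move=> pQ pP hi hp fi fp ki.
exists (seq3 Q P).
exists (fun n => match n return 'M_(rdim (seq3 Q P n.+1), rdim (seq3 Q P n)) with
                 | 0 => i | _ => 0 end).
exists p; split.
- by case=> [|[|n]] //=; apply: rzero_proj.
- by case=> [|n] /=; [exact: hi|exact: hom0].
- by split.
- case=> [|n] /=; last exact: eq_nocol.
  by move: fi; rewrite -kermx_eq0 => /eqP ->; rewrite !sub0mx.
- by [].
Qed.

Lemma idle0 (M : rmod) : injective_mod M -> id_le M 0.
Proof.
move=> iM.
exists (seq2 M).
exists (fun n => 0 : 'M_(rdim (seq2 M n), rdim (seq2 M n.+1))).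
exists 1%:M; split.
- by case=> [|n] //=; apply: rzero_inj.
- by move=> n; apply: hom0.
- split; first exact: hom_id.
    by rewrite /row_free mxrank1.
  by rewrite /= kermx0 !submx1.
- by move=> n; apply: eq_nocol.
- by [].
Qed.

Lemma pdle0 (M : rmod) : projective_mod M -> pd_le M 0.
Proof.
move=> pM.
exists (seq2 M).
exists (fun n => 0 : 'M_(rdim (seq2 M n.+1), rdim (seq2 M n))).
exists 1%:M; split.
- by case=> [|n] //=; apply: rzero_proj.
- by move=> n; apply: hom0.
- split; first exact: hom_id.
    by rewrite /row_full mxrank1.
  have k1 : (kermx (1%:M : 'M[K]_(rdim M)) <= (0 : 'M[K]_(rdim M)))%MS.
    by rewrite submx0 kermx_eq0 /row_free mxrank1.
  by apply/andP; split; [apply: submx_trans k1 _; apply: sub0mx|exact: sub0mx].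
- by move=> n; apply: eq_nocol.
- by [].
Qed.

Lemma zero_cols m n (X : 'M[K]_(m, n)) : n = 0%N -> X = 0.
Proof. by move=> e; apply/matrixP => x y; have := leq_trans (ltn_ord y) (eq_leq e). Qed.

Lemma zero_rows m n (X : 'M[K]_(m, n)) : m = 0%N -> X = 0.
Proof. by move=> e; apply/matrixP => x y; have := leq_trans (ltn_ord x) (eq_leq e). Qed.

Lemma idle0_inj (M : rmod) : id_le M 0 -> injective_mod M.
Proof.
case=> I [d [e [iI hd [he fe ek] ex r1]]].
have fe' : row_full e.
  rewrite -sub1mx (submx_trans _ (andP ek).2) //.
  by apply/sub_kermxP; rewrite mul1mx; apply: zero_cols.
have [g [eg ge]] := bij_of fe (full_leq fe').
exact: inj_retract he (bij_hom he eg ge) eg (iI 0%N).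
Qed.

Lemma pdle0_proj (M : rmod) : pd_le M 0 -> projective_mod M.
Proof.
case=> P [d [e [pP hd [he fe ke] ex r1]]].
have d0 : d 0%N = 0 by apply: zero_rows.
have fe' : row_free e.
  rewrite -kermx_eq0 -submx0 (submx_trans (andP ke).1) //.
  by rewrite d0 sub0mx.
have [g [eg ge]] := bij_of fe' (full_leq fe).
exact: proj_retract (bij_hom he eg ge) he ge (pP 0%N).
Qed.

Definition Rel (P J : rmod) : Prop :=
  exists (Q : rmod) (i : 'M_(rdim P, rdim Q)) (p : 'M_(rdim Q, rdim J)),
  [/\ indecomposable P, indecomposable J, indecomposable Q, projective_mod Q & injective_mod Q] /\
  [/\ is_hom i, is_hom p, row_free i, row_full p & (kermx p == i)%MS].

Definition S1 (P : rmod) := [/\ indecomposable P, projective_mod P & inj_dim_eq P 1].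
Definition S2 (I : rmod) := [/\ indecomposable I, injective_mod I & proj_dim_eq I 1].

Lemma Rmem (nak : nakayama A) (P J : rmod) :
  Rel P J -> projective_mod P -> injective_mod J -> S1 P /\ S2 J.
Proof.
case=> Q [i [p [[indP indJ indQ pQ iQ] [hi hp fi fp ki]]]] pP iJ.
have uQ := nak _ indQ.
split; split => //; split.
- exact: idle1 hi hp fi fp ki.
- case=> // _ /idle0_inj iP.
  have [r [hr ir]] := iP P Q i 1%:M hi fi (hom_id P).
  have fi' := split_mono uQ hi hr ir indP.1.
  have p0 : p = 0.
    have /sub_kermxP := submx_trans (submx_full 1%:M fi') (andP ki).2.
    by rewrite mul1mx.
  by move: fp indJ.1; rewrite p0 /row_full mxrank0 => /eqP <-.
- exact: pdle1 pQ pP hi hp fi fp ki.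
- case=> // _ /pdle0_proj pJ.
  have [s [hs sp]] := pJ Q J p 1%:M hp fp (hom_id J).
  have fp' := split_epi uQ hp hs sp indJ.1.
  have i0 : i = 0.
    move: fp'; rewrite -kermx_eq0 => /eqP k0.
    by apply/eqP; rewrite -submx0 -k0 (andP ki).2.
  by move: fi indP.1; rewrite i0 /row_free mxrank0 => /eqP <-.
Qed.


Lemma free_nz m n (X : 'M[K]_(m, n)) : row_free X -> (0 < m)%N -> X != 0.
Proof.
move=> fX pos; apply/eqP => X0; move: fX; rewrite X0 /row_free mxrank0 => /eqP e.
by rewrite -e in pos.
Qed.

Lemma ext_free (P Q N : rmod) (i : 'M_(rdim P, rdim Q)) (psi : 'M_(rdim Q, rdim N)) :
  uniserial Q -> is_hom i -> is_hom psi -> row_free i -> (0 < rdim P)%N ->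
  row_free (i *m psi) -> row_free psi.
Proof.
move=> uQ hi hpsi fi pos fip.
rewrite -kermx_eq0; apply/eqP.
apply: (uni_cap0 uQ (stab_ker hpsi) (stab_img hi) _ (free_nz fi pos)).
apply/rV_subP => v; rewrite sub_capmx => /andP[vk /submxP[z ez]].
move/sub_kermxP: vk; rewrite ez -mulmxA => /eqP; rewrite mulmx_free_eq0 // => /eqP z0.
by rewrite z0 mul0mx sub0mx.
Qed.

Lemma ker_van (Q J N : rmod) (P : rmod) (p : 'M[K]_(rdim Q, rdim J)) (i : 'M[K]_(rdim P, rdim Q))
  (f : 'M[K]_(rdim Q, rdim N)) :
  (kermx p == i)%MS -> i *m f = 0 -> kermx p *m f = 0.
Proof.
move=> ki if0; have /submxP [D ->] := (andP ki).1.
by rewrite -mulmxA if0 mulmx0.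
Qed.

Lemma ip0 (Q J P : rmod) (p : 'M[K]_(rdim Q, rdim J)) (i : 'M[K]_(rdim P, rdim Q)) :
  (kermx p == i)%MS -> i *m p = 0.
Proof. by move=> ki; apply/sub_kermxP; exact: (andP ki).2. Qed.

Lemma bij_of_full m n (f : 'M[K]_(m, n)) : row_full f -> (m <= n)%N ->
  exists g, f *m g = 1%:M /\ g *m f = 1%:M.
Proof.
move=> ff le; apply: bij_of (full_leq ff).
by rewrite /row_free eqn_leq rank_leq_row (leq_trans le) // (eqP ff).
Qed.

Lemma iso_free (M N : rmod) (f : 'M[K]_(rdim M, rdim N)) g :
  f *m g = 1%:M -> row_free f.
Proof. by move=> fg; apply/row_freeP; exists g. Qed.

Lemma iso_full (M N : rmod) (f : 'M[K]_(rdim M, rdim N)) g :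
  g *m f = 1%:M -> row_full f.
Proof. by move=> gf; apply/row_fullP; exists g. Qed.

Lemma R_iso1 (nak : nakayama A) (P J P' J' : rmod) :
  Rel P J -> Rel P' J' -> iso P P' -> iso J J'.
Proof.
case=> Q [i [p [[indP indJ indQ pQ iQ] [hi hp fi fp ki]]]].
case=> Q' [i' [p' [[indP' indJ' indQ' pQ' iQ'] [hi' hp' fi' fp' ki']]]].
case=> f [f' [hf hf' ff' f'f]].
have uQ := nak _ indQ; have uQ' := nak _ indQ'.
have [psi [hpsi ipsi]] := iQ' P Q i (f *m i') hi fi (hom_comp hf hi').
have [psi' [hpsi' ipsi']] := iQ P' Q' i' (f' *m i) hi' fi' (hom_comp hf' hi).
have fpsi : row_free psi.
  apply: (ext_free uQ hi hpsi fi indP.1); rewrite ipsi.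
  exact: freeM (iso_free (M := P) (N := P') ff') fi'.
have fpsi' : row_free psi'.
  apply: (ext_free uQ' hi' hpsi' fi' indP'.1); rewrite ipsi'.
  exact: freeM (iso_free (M := P') (N := P) f'f) fi.
have [psii [ppi pip]] := bij_of fpsi (free_leq fpsi').
have hpsii := bij_hom hpsi ppi pip.
have k1 : i *m (psi *m p') = 0.
  by rewrite mulmxA ipsi -mulmxA (ip0 ki') mulmx0.
have k2 : i' *m (psii *m p) = 0.
  have e : i' *m psii = f' *m i.
    by rewrite -[i']mul1mx -f'f -(mulmxA f') -ipsi -(mulmxA f') -(mulmxA i) ppi mulmx1.
  by rewrite mulmxA e -mulmxA (ip0 ki) mulmx0.
have [th [hth pth]] := quot_map hp fp (hom_comp hpsi hp') (ker_van ki k1).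
have [th' [hth' pth']] := quot_map hp' fp' (hom_comp hpsii hp) (ker_van ki' k2).
exists th, th'; split => //.
  apply: (row_full_inj fp); rewrite mulmxA pth -mulmxA pth' mulmxA ppi mul1mx.
  by rewrite mulmx1.
apply: (row_full_inj fp'); rewrite mulmxA pth' -mulmxA pth mulmxA pip mul1mx.
by rewrite mulmx1.
Qed.

Lemma R_iso2 (nak : nakayama A) (P J P' J' : rmod) :
  Rel P J -> Rel P' J' -> iso J J' -> iso P P'.
Proof.
case=> Q [i [p [[indP indJ indQ pQ iQ] [hi hp fi fp ki]]]].
case=> Q' [i' [p' [[indP' indJ' indQ' pQ' iQ'] [hi' hp' fi' fp' ki']]]].
case=> t [t' [ht ht' tt' t't]].
have uQ := nak _ indQ; have uQ' := nak _ indQ'.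
have [psi [hpsi psip]] := pQ Q' J' p' (p *m t) hp' fp' (hom_comp hp ht).
have [psi' [hpsi' psip']] := pQ' Q J p (p' *m t') hp fp (hom_comp hp' ht').
have fpsi : row_full psi.
  apply: (lift_surj uQ' indJ'.1 hp' fp' hpsi _ psip).
  exact: fullM fp (iso_full (M := J) (N := J') t't).
have fpsi' : row_full psi'.
  apply: (lift_surj uQ indJ.1 hp fp hpsi' _ psip').
  exact: fullM fp' (iso_full (M := J') (N := J) tt').
have [psii [ppi pip]] := bij_of_full fpsi (full_leq fpsi').
have hpsii := bij_hom hpsi ppi pip.
have e1 : psii *m p = p' *m t'.
  by rewrite -[p' *m t']mul1mx -pip -!mulmxA (mulmxA psi) psip -mulmxA tt' mulmx1.
have [s [hs si]] : exists s : 'M_(rdim P, rdim P'), is_hom s /\ s *m i' = i *m psi.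
  apply: lift_free (hom_comp hi hpsi) hi' fi' _.
  apply: submx_trans (andP ki').1; apply/sub_kermxP.
  by rewrite -mulmxA psip mulmxA (ip0 ki) mul0mx.
have [s' [hs' si']] : exists s' : 'M_(rdim P', rdim P), is_hom s' /\ s' *m i = i' *m psii.
  apply: lift_free (hom_comp hi' hpsii) hi fi _.
  apply: submx_trans (andP ki).1; apply/sub_kermxP.
  by rewrite -mulmxA e1 mulmxA (ip0 ki') mul0mx.
exists s, s'; split => //.
  by apply: (row_free_inj fi); rewrite -mulmxA si' mulmxA si -mulmxA ppi mulmx1 mul1mx.
by apply: (row_free_inj fi'); rewrite -mulmxA si mulmxA si' -mulmxA pip mulmx1 mul1mx.
Qed.


Lemma count_of_list r (S : rmod -> Prop) (L : 'I_r -> rmod) :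
  (forall M, S M -> exists k, iso M (L k)) -> exists n, num_iso_classes S n.
Proof.
elim: r S L => [|r IH] S L HL.
  exists 0%N, L; split; try by case.
  by move=> M /HL [[]].
pose L' (k : 'I_r) := L (widen_ord (leqnSn r) k).
case: (classic (exists M0, S M0 /\ iso M0 (L ord_max))) => [[M0 [SM0 isoM0]]|nM0].
  pose S' M := S M /\ ~ iso M M0.
  have HL' : forall M, S' M -> exists k, iso M (L' k).
    move=> M [SM nM]; have [k ik] := HL M SM.
    case: (unliftP ord_max k) => [j ek|ek]; rewrite ek in ik.
      exists j; rewrite /L'; suff -> : widen_ord (leqnSn r) j = lift ord_max j by [].
      by apply: val_inj; rewrite /= /bump leqNgt ltn_ord.
    by exfalso; apply: nM; apply: iso_trans ik _; apply: iso_sym.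
  have [n [s [Ss sinj scomp]]] := IH S' L' HL'.
  exists n.+1, (fun i => match unlift ord_max i with Some j => s j | None => M0 end).
  split.
  - move=> i; case: (unliftP ord_max i) => [j _|_] //; exact: (Ss j).1.
  - move=> i j; case: (unliftP ord_max i) => [i' ->|->]; case: (unliftP ord_max j) => [j' ->|->] //.
    + by move=> /sinj ->.
    + by move=> isoij; exfalso; apply: (Ss i').2.
    + by move=> isoij; exfalso; apply: (Ss j').2; apply: iso_sym.
  - move=> M SM; case: (classic (iso M M0)) => [iM|nM].
      by exists ord_max; rewrite unlift_none.
    have [j ij] := scomp M (conj SM nM).
    by exists (lift ord_max j); rewrite liftK.
apply: IH (fun k => L' k) _ => M SM; have [k ik] := HL M SM.
case: (unliftP ord_max k) => [j ek|ek].
  exists j; rewrite /L'; suff <- : lift ord_max j = widen_ord (leqnSn r) j by rewrite -ek.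
  by apply: val_inj; rewrite /= /bump leqNgt ltn_ord.
by exfalso; apply: nM0; exists M; split => //; rewrite -ek.
Qed.

Lemma transfer (S T : rmod -> Prop) (R : rmod -> rmod -> Prop) n :
  (forall P, S P -> exists J, T J /\ R P J) ->
  (forall J, T J -> exists P, S P /\ R P J) ->
  (forall P J P' J', R P J -> R P' J' -> iso P P' -> iso J J') ->
  (forall P J P' J', R P J -> R P' J' -> iso J J' -> iso P P') ->
  num_iso_classes S n -> num_iso_classes T n.
Proof.
move=> HST HTS iso1 iso2 [s [Ss sinj scomp]].
have ex i : {J | T J /\ R (s i) J}.
  by apply: constructive_indefinite_description; apply: HST.
exists (fun i => sval (ex i)); split.
- by move=> i; case: (ex i) => J [].
- move=> i j isoij; apply: sinj.
  by apply: (iso2 _ _ _ _ (svalP (ex i)).2 (svalP (ex j)).2 isoij).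
- move=> J TJ; have [P [SP RPJ]] := HTS J TJ.
  have [k ik] := scomp P SP.
  exists k; exact: iso1 _ _ _ _ RPJ (svalP (ex k)).2 ik.
Qed.


Lemma free_of_prod m n p (X : 'M[K]_(m, n)) (Y : 'M[K]_(n, p)) :
  row_free (X *m Y) -> row_free X.
Proof.
move=> f; rewrite /row_free eqn_leq rank_leq_row /=.
by rewrite -{1}(eqP f) mxrankM_maxl.
Qed.

Lemma exists_J (nak : nakayama A) (P : rmod) :
  S1 P -> exists J, injective_mod J /\ Rel P J.
Proof.
case=> indP pP [id1 nid0].
have uP := nak _ indP; have posP := indP.1.
have niP : ~ injective_mod P by move=> iP; apply: (nid0 0%N isT); apply: idle0.
case: id1 => I [d [e [iI hd [he fe ek] ex r2]]].
have hd0 := hd 0%N.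
have fd0 : row_full (d 0%N).
  rewrite -sub1mx (submx_trans _ (andP (ex 0%N)).2) //.
  by apply/sub_kermxP; rewrite mul1mx; apply: zero_cols.
have ed0 : e *m d 0%N = 0 by apply/sub_kermxP; exact: (andP ek).1.
pose cand n := exists (Q : rmod) (j : 'M[K]_(rdim P, rdim Q)),
  [/\ indecomposable Q, projective_mod Q, is_hom j, row_free j & rdim Q = n].
have embI (Q : rmod) (j : 'M[K]_(rdim P, rdim Q)) : indecomposable Q -> is_hom j ->
    row_free j -> exists al : 'M[K]_(rdim Q, rdim (I 0%N)),
      [/\ is_hom al, j *m al = e & row_free al].
  move=> indQ hj fj; have [al [hal jal]] := iI 0%N P Q j e hj fj he.
  exists al; split => //; apply: (ext_free (nak _ indQ) hj hal fj posP).
  by rewrite jal.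
have bnd n : cand n -> (n <= rdim (I 0%N))%N.
  case=> Q [j [indQ pQ hj fj <-]].
  by have [al [_ _ fal]] := embI Q j indQ hj fj; apply: free_leq fal.
have c0 : cand (rdim P).
  exists P, 1%:M; split => //; first exact: hom_id.
  by rewrite /row_free mxrank1.
have [n [[Q [j [indQ pQ hj fj eQ]]] nmax]] := max_exists c0 bnd.
have uQ := nak _ indQ; have posQ := indQ.1.
have [al [hal jal fal]] := embI Q j indQ hj fj.
have [s ds] := decomp_ex (I 0%N).
have [x [ix fx]] := comp_inj ds uQ posQ hal fal.
have [indE hci hcp cicp] := ds.1 x ix.
have iE : injective_mod (cQ x) := inj_retract hci hcp cicp (iI 0%N).
have [Q' [pi [indQ' pQ' hpi fpi]]] := cover (nak _ indE) indE.1.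
have hbe : is_hom (al *m cp x) := hom_comp hal hcp.
have [h [hh hpe]] := pQ Q' (cQ x) pi (al *m cp x) hpi fpi hbe.
have fh : row_free h by apply: (@free_of_prod _ _ _ h pi); rewrite hpe.
have le1 : (rdim Q' <= rdim Q)%N.
  by rewrite eQ; apply: nmax; exists Q', (j *m h); split => //; [exact: hom_comp|exact: freeM].
have [hi [hhi hih]] := bij_of fh le1.
have fbe : row_full (al *m cp x).
  by rewrite -hpe; apply: fullM fpi; apply/row_fullP; exists hi.
have [bi [bbi bib]] := bij_of fx (full_leq fbe).
have iQ : injective_mod Q := inj_retract hbe (bij_hom hbe bbi bib) bbi iE.
have [b0 [hb0 eb0]] := iQ P (I 0%N) e j he fe hj.
pose g := al *m b0.
have jg : j *m g = j by rewrite /g mulmxA jal eb0.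
have hg : is_hom g := hom_comp hal hb0.
have fg : row_free g by apply: (ext_free uQ hj hg fj posP); rewrite jg.
have [gi [ggi gig]] := bij_of fg (leqnn _).
have hgi := bij_hom hg ggi gig.
pose u := b0 *m gi.
have hu : is_hom u := hom_comp hb0 hgi.
have alu : al *m u = 1%:M by rewrite /u mulmxA.
have jgi : j *m gi = j by rewrite -{1}jg -mulmxA ggi mulmx1.
have eu : e *m u = j by rewrite /u mulmxA eb0 jgi.
have had : is_hom (al *m d 0%N) := hom_comp hal hd0.
have sU : submod <<al *m d 0%N>>%MS := stab_gen (stab_img had).
pose J := rsub sU.
have hio := rsub_incl sU; have fio := rsub_free sU.
have sub : (al *m d 0%N <= <<al *m d 0%N>>)%MS by rewrite genmxE.
have [hp pio] := rsub_factor sU had sub.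
set p := (al *m d 0%N) *m pinvmx _ in hp pio.
have fp : row_full p.
  by rewrite /row_full /= -(mxrankMfree _ fio) pio genmxE.
have kp : (kermx p == j)%MS.
  apply/andP; split.
    have k1 : (kermx p *m al <= e)%MS.
      apply: submx_trans (andP ek).2; apply/sub_kermxP.
      have := congr1 (mulmx (kermx p)) pio; rewrite mulmxA mulmx_ker mul0mx => h0.
      by rewrite -mulmxA -h0.

    have /submxP [W eW] := k1.
    have : kermx p = W *m j.
      by apply: (row_free_inj fal); rewrite eW -jal mulmxA.
    by move=> ->; apply: submxMl.
  apply/sub_kermxP; apply/eqP; rewrite -(mulmx_free_eq0 _ fio) -mulmxA pio mulmxA.
  by rewrite jal ed0.
have [th [hth dth]] : exists th : 'M_(rdim (I 1%N), rdim J), is_hom th /\ d 0%N *m th = u *m p.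
  apply: quot_map hd0 fd0 (hom_comp hu hp) _.
  have /submxP [W ->] := (andP ek).2.
  by rewrite -mulmxA (mulmxA e) eu (@ip0 Q J P p j kp) mulmx0.
have ioth : row_base <<al *m d 0%N>>%MS *m th = 1%:M.
  apply: (row_full_inj fp); rewrite mulmxA pio -mulmxA dth mulmxA alu mul1mx.
  by rewrite mulmx1.
have iJ : injective_mod J := inj_retract hio hth ioth (iI 1%N).
have posJ : (0 < rdim J)%N.
  case: (posnP (rdim J)) => // J0; exfalso; apply: niP.
  have p0 : p = 0 := zero_cols _ J0.
  have fj' : row_full j.
    rewrite -sub1mx (submx_trans _ (andP kp).1) //.
    by apply/sub_kermxP; rewrite p0 mulmx0.
  have [ji [jji jij]] := bij_of fj (full_leq fj').
  exact: inj_retract hj (bij_hom hj jji jij) jji iQ.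
have indJ : indecomposable J := uni_indec (uni_quot uQ hp fp) posJ.
exists J; split => //; exists Q, j, p; split; split => //.
Qed.


Lemma full_of_prod m n p (X : 'M[K]_(m, n)) (Y : 'M[K]_(n, p)) :
  row_full (X *m Y) -> row_full Y.
Proof.
move=> f; rewrite /row_full eqn_leq rank_leq_col /=.
by rewrite -{1}(eqP f) mxrankM_maxr.
Qed.

Lemma exists_P (nak : nakayama A) (J : rmod) :
  S2 J -> exists P, projective_mod P /\ Rel P J.
Proof.
case=> indJ iJ [pd1 npd0].
have uJ := nak _ indJ; have posJ := indJ.1.
have npJ : ~ projective_mod J by move=> pJ; apply: (npd0 0%N isT); apply: pdle0.
case: pd1 => Pn [d [e [pP hd [he fe ke] ex r2]]].
have hd0 := hd 0%N.
have fd0 : row_free (d 0%N).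
  rewrite -kermx_eq0 -submx0 (submx_trans (andP (ex 0%N)).1) //.
  by rewrite (zero_rows (d 1%N) r2) sub0mx.
pose cand n := exists (E : rmod) (q : 'M[K]_(rdim E, rdim J)),
  [/\ indecomposable E, injective_mod E, is_hom q, row_full q & rdim E = n].
have liftP (E : rmod) (q : 'M[K]_(rdim E, rdim J)) : indecomposable E -> is_hom q ->
    row_full q -> exists lam : 'M[K]_(rdim (Pn 0%N), rdim E),
      [/\ is_hom lam, lam *m q = e & row_full lam].
  move=> indE hq fq; have [lam [hlam lq]] := pP 0%N E J q e hq fq he.
  by exists lam; split => //; apply: (lift_surj (nak _ indE) posJ hq fq hlam fe lq).
have bnd n : cand n -> (n <= rdim (Pn 0%N))%N.
  case=> E [q [indE iE hq fq <-]].
  by have [lam [_ _ flam]] := liftP E q indE hq fq; apply: full_leq flam.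
have c0 : cand (rdim J).
  exists J, 1%:M; split => //; first exact: hom_id.
  by rewrite /row_full mxrank1.
have [n [[E [q [indE iE hq fq eE]]] nmax]] := max_exists c0 bnd.
have uE := nak _ indE; have posE := indE.1.
have [lam [hlam lq flam]] := liftP E q indE hq fq.
have [s ds] := decomp_ex (Pn 0%N).
have [x [ix fx]] := comp_surj ds uE posE hlam flam.
have [indQ hci hcp cicp] := ds.1 x ix.
set Q := cQ x in indQ hci hcp cicp fx.
have pQ : projective_mod Q := proj_retract hci hcp cicp (pP 0%N).
have uQ := nak _ indQ; have posQ := indQ.1.
have hsig : is_hom (ci x *m lam) := hom_comp hci hlam.
have [s2 ds2] := decomp_ex (Coind Q).
have [y [iy fy]] := comp_inj ds2 uQ posQ (emb_hom Q) (emb_free Q).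
have [indE' hci' hcp' cicp'] := ds2.1 y iy.
have iE' : injective_mod (cQ y) := inj_retract hci' hcp' cicp' (Coind_inj (M:=Q)).
have htau : is_hom (emb Q *m cp y) := hom_comp (emb_hom Q) hcp'.
have [mu [hmu tmu]] := iE Q (cQ y) (emb Q *m cp y) (ci x *m lam) htau fy hsig.
have fmu : row_full mu by apply: (@full_of_prod _ _ _ (emb Q *m cp y)); rewrite tmu.
have le1 : (rdim (cQ y) <= rdim E)%N.
  rewrite eE; apply: nmax; exists (cQ y), (mu *m q); split => //.
    exact: hom_comp hmu hq.
  exact: fullM fmu fq.
have [mi [mmi mim]] := bij_of_full fmu le1.
have ftau : row_full (emb Q *m cp y).
  have -> : emb Q *m cp y = ci x *m lam *m mi by rewrite -tmu -(mulmxA _ mu) mmi mulmx1.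
  by apply: fullM fx _; apply/row_fullP; exists mu.
have [ti [tti tit]] := bij_of fy (full_leq ftau).
have iQ : injective_mod Q := inj_retract htau (bij_hom htau tti tit) tti iE'.
pose p := ci x *m lam *m q.
have hp : is_hom p := hom_comp hsig hq.
have fp : row_full p := fullM fx fq.
have sK : submod (kermx p) := stab_ker hp.
pose P := rsub sK.
have hi := rsub_incl sK; have fi := rsub_free sK.
set i := row_base (kermx p) in hi fi.
have ki : (kermx p == i)%MS by apply/andP; split; rewrite /i eq_row_base ?submx_refl.
have ip : i *m p = 0 by apply/sub_kermxP; rewrite /i eq_row_base.
have [a [ha ae]] := pQ (Pn 0%N) J e p he fe hp.
have [b [hb bp]] := pP 0%N Q J p e hp fp he.
have hab : is_hom (a *m b) := hom_comp ha hb.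
have abp : a *m b *m p = p by rewrite -mulmxA bp ae.
have fab : row_full (a *m b) := lift_surj uQ posJ hp fp hab fp abp.
have [ci0 [aci cia]] := bij_of_full fab (leqnn _).
have hci0 := bij_hom hab aci cia.
pose psi := b *m ci0.
have hpsi : is_hom psi := hom_comp hb hci0.
have apsi : a *m psi = 1%:M by rewrite /psi mulmxA.
have cip : ci0 *m p = p by rewrite -{1}abp mulmxA cia mul1mx.
have psip : psi *m p = e by rewrite /psi -mulmxA cip bp.
have [sm [hsm smd]] : exists sm : 'M[K]_(rdim P, rdim (Pn 1%N)), is_hom sm /\ sm *m d 0%N = i *m a.
  apply: (@lift_free P (Pn 1%N) (Pn 0%N) (i *m a) (d 0%N) (hom_comp hi ha) hd0 fd0).
  apply: submx_trans (andP ke).1; apply/sub_kermxP.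
  by rewrite -mulmxA ae ip.
have [rm [hrm rmi]] : exists rm : 'M[K]_(rdim (Pn 1%N), rdim P), is_hom rm /\ rm *m i = d 0%N *m psi.
  apply: (@lift_free (Pn 1%N) P Q (d 0%N *m psi) i (hom_comp hd0 hpsi) hi fi).
  apply: submx_trans (andP ki).1; apply/sub_kermxP.
  by rewrite -mulmxA psip; apply/sub_kermxP; exact: (andP ke).2.
have smrm : sm *m rm = 1%:M.
  apply: (row_free_inj fi); rewrite -mulmxA rmi mulmxA smd -mulmxA apsi mulmx1.
  by rewrite mul1mx.
have pPr : projective_mod P := proj_retract hsm hrm smrm (pP 1%N).
have posP : (0 < rdim P)%N.
  case: (posnP (rdim P)) => // P0; exfalso; apply: npJ.
  have fp' : row_free p.
    rewrite -kermx_eq0 -mxrank_eq0; apply/eqP; exact: P0.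
  have [pi [ppi pip]] := bij_of fp' (full_leq fp).
  exact: proj_retract (bij_hom hp ppi pip) hp pip pQ.
have indP : indecomposable P := uni_indec (uni_sub (sU := sK) uQ) posP.
by exists P; split => //; exists Q, i, p; split; split.
Qed.


Lemma In_nth_ord T (x0 x : T) (s : seq T) :
  List.In x s -> exists k : 'I_(size s), nth x0 s k = x.
Proof.
elim: s => [|y s IH] //= [<-|ix].
  by exists ord0.
have [k ek] := IH ix; exists (lift ord0 k); by rewrite lift0.

Qed.

Lemma cyc_surj (E : rmod) : uniserial E -> (0 < rdim E)%N ->
  exists n0 : 'rV_(rdim E), row_full (cyc n0 : 'M_(rdim Areg, rdim E)).
Proof.
move=> uE pos.
pose F (j : 'I_(rdim E)) : 'M_(rdim E) := <<cyc (delta_mx 0 j)>>%MS.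
have sF j : List.In j (index_enum 'I_(rdim E)) -> stab (F j).
  by move=> _; apply: stab_gen; exact: stab_img (cyc_hom _).
have full : (1%:M <= \sum_(j < rdim E) F j)%MS.
  apply/row_subP => i; rewrite row1 (sumsmx_sup i) // genmxE.
  by rewrite -[X in (X <= _)%MS]cyc1 submxMl.
have [j [_ fj]] := chain_full uE pos sF full.
by exists (delta_mx 0 j); move: fj; rewrite /row_full genmxE.
Qed.

Lemma fin1 (nak : nakayama A) :
  exists r (L : 'I_r -> rmod), forall P, S1 P -> exists k, iso P (L k).
Proof.
have [s ds] := decomp_ex Areg.
pose x0 : comp Areg := existT _ rzero (0, 0).
exists (size s), (fun k => cQ (nth x0 s k)).
move=> P [indP pP _]; have uP := nak _ indP; have posP := indP.1.
have [n0 fc] := cyc_surj uP posP.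
have [x [ix fx]] := comp_surj ds uP posP (cyc_hom n0) fc.
have [indQ hci hcp cicp] := ds.1 x ix.
have hf : is_hom (ci x *m cyc n0) := hom_comp hci (cyc_hom n0).
have [sP [hsP sP1]] := pP (cQ x) P (ci x *m cyc n0) 1%:M hf fx (hom_id P).
have ff := split_epi (nak _ indQ) hf hsP sP1 posP.
have [g [fg gf]] := bij_of ff (full_leq fx).
have [k ek] := In_nth_ord x0 ix.
exists k; rewrite ek; exists g, (ci x *m cyc n0); split => //.
exact: bij_hom hf fg gf.
Qed.

End Nak.

Theorem mainTheorem9 (K : fieldType) (A : falgType K) :
  connected_alg A -> elementary_alg A -> nakayama A ->
  exists n : nat,
    num_iso_classes (fun P : rmod A => [/\ indecomposable P, projective_mod P & inj_dim_eq P 1])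
                    n /\
    num_iso_classes (fun I : rmod A => [/\ indecomposable I, injective_mod I & proj_dim_eq I 1])
                    n.
Proof.
move=> _ _ nak.
have [r [L HL]] := fin1 nak.
have [n hn] := count_of_list HL.
exists n; split; first exact: hn.
apply: (@transfer K A (@S1 K A) (@S2 K A) (@Rel K A) n) hn.
- move=> P SP; have [J [iJ RPJ]] := exists_J nak SP.
  case: (SP) => _ pP _.
  by exists J; split => //; apply: (Rmem nak RPJ pP iJ).2.
- move=> J SJ; have [P [pP RPJ]] := exists_P nak SJ.
  case: (SJ) => _ iJ _.
  by exists P; split => //; apply: (Rmem nak RPJ pP iJ).1.
- by move=> P J P' J'; apply: R_iso1.
- by move=> P J P' J'; apply: R_iso2.
Qed.
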